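(* Let $F(z,t)=\sum_{n\ge1}\sum_{m\ge0}a_{n,m}z^nt^m$ be very nice and let $\Theta=(\Theta_1,\ldots,\Theta_r)$ be a (possibly empty) sequence of the operators $\mathcal E,\mathcal N$ containing no two consecutive $\mathcal N$'s. Then $(\Theta F)(z,1)$ is a rational function of $z$, where $\Theta F=\Theta_r\circ\cdots\circ\Theta_1F$.
   Context: A bivariate series $F(z,t)$ is nice if $F(z,z^k)$ is a rational function of $z$ for every integer $k\ge0$; it is very nice if it is nice and $F(z,0)$ is also rational. For $G(z,t)=\sum_{n\ge1}\sum_{m\ge0}a_{n,m}z^nt^m$: $\mathcal E G(z,t)=\frac{G(z,1)-ztG(z,zt)}{1-zt}$ and $\mathcal N G(z,t)=G(z,0)+\sum_{n\ge1}\sum_{m\ge1}a_{n,m}\frac{1}{1-z^m}\cdot\frac{1-(tz)^m}{1-tz}z^n$. *)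

(* Defs.v *)
From HB Require Import structures.
From mathcomp Require Import all_boot all_order all_algebra.
Set Implicit Arguments. Unset Strict Implicit. Unset Printing Implicit Defensive.
Import Order.TTheory GRing.Theory Num.Theory.
Local Open Scope ring_scope.

(* A bivariate series F(z,t) = sum_{n,m} a_{n,m} z^n t^m in K[t][[z]] is
   represented by its z-coefficients: [F n] is the polynomial in t
   sum_m a_{n,m} t^m (so (F n)`_m = a_{n,m}). *)
Definition bser (K : fieldType) := nat -> {poly K}.

(* A univariate formal power series f(z) = sum_N f N z^N is rational if
   Q(z) f(z) = P(z) for polynomials P, Q with Q(0) <> 0. *)
Definition rational_series (K : fieldType) (f : nat -> K) : Prop :=
  exists (P Q : {poly K}), Q`_0 != 0 /\
    forall N : nat, \sum_(i < N.+1) Q`_i * f (N - i)%N = P`_N.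

(* z-coefficients of F(z, z^k):  [z^N] = sum_{n + k m = N} a_{n,m}.
   For k = 0 this is F(z,1). *)
Definition subst_zk (K : fieldType) (F : bser K) (k : nat) : nat -> K :=
  fun N => \sum_(n < N.+1) \sum_(m < size (F n))
             (if (n + k * m == N)%N then (F n)`_m else 0).

Definition at_t1 (K : fieldType) (F : bser K) : nat -> K := fun N => (F N).[1].
Definition at_t0 (K : fieldType) (F : bser K) : nat -> K := fun N => (F N)`_0.

Definition nice (K : fieldType) (F : bser K) : Prop :=
  forall k : nat, rational_series (subst_zk F k).

Definition very_nice (K : fieldType) (F : bser K) : Prop :=
  nice F /\ rational_series (at_t0 F).

Definition bs_t1 (K : fieldType) (G : bser K) : bser K := fun N => ((G N).[1])%:P.
(* G(z, z t) : [z^N] = sum_{n+m=N} a_{n,m} t^m *)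
Definition bs_zt (K : fieldType) (G : bser K) : bser K :=
  fun N => \sum_(n < N.+1) (G n)`_(N - n) *: 'X^(N - n).
Definition bs_mul_zt (K : fieldType) (G : bser K) : bser K :=
  fun N => if N is N'.+1 then 'X * G N' else 0.
Definition bs_div_1mzt (K : fieldType) (G : bser K) : bser K :=
  fun N => \sum_(j < N.+1) 'X^j * G (N - j)%N.

Definition opE (K : fieldType) (G : bser K) : bser K :=
  bs_div_1mzt (fun N => bs_t1 G N - bs_mul_zt (bs_zt G) N).

(* N G = G(z,0) + sum_{n>=1,m>=1} a_{n,m} z^n/(1-z^m) * (1-(tz)^m)/(1-tz),
   expanded: a_{n,m} z^n/(1-z^m) (1-(tz)^m)/(1-tz)
           = sum_{j>=0} sum_{i<m} a_{n,m} t^i z^(n + m j + i). *)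
Definition opN (K : fieldType) (G : bser K) : bser K :=
  fun N => ((G N)`_0)%:P +
    \sum_(1 <= n < N.+1) \sum_(1 <= m < size (G n)) \sum_(i < m)
       (if ((n + i <= N)%N && (m %| (N - n - i))%N)
        then (G n)`_m *: 'X^i else 0).

Inductive op := OE | ON.

Definition apply_op (K : fieldType) (o : op) (G : bser K) : bser K :=
  match o with OE => opE G | ON => opN G end.

(* Theta F = Theta_r o ... o Theta_1 F  for Theta = [:: Theta_1; ...; Theta_r] *)
Definition apply_ops (K : fieldType) (s : seq op) (F : bser K) : bser K :=
  foldl (fun G o => apply_op o G) F s.

Fixpoint no_two_N (s : seq op) : bool :=
  match s with
  | ON :: ((ON :: _) as _) => false
  | _ :: s' => no_two_N s'
  | [::] => true
  end.

(* Main.v *)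
Require Import Defs.
From HB Require Import structures.
From mathcomp Require Import all_boot all_order all_algebra.
From mathcomp Require Import zify.
Import GRing.Theory.
Local Open Scope ring_scope.
Set Implicit Arguments. Unset Strict Implicit.


Section A.
Variable K : fieldType.
Implicit Types (f g : nat -> K) (p q r : {poly K}).

Definition cv p f (N : nat) : K := \sum_(i < N.+1) p`_i * f (N - i)%N.

Lemma sum_ifeq (F : nat -> K) c n :
  \sum_(i < n) (if (i == c :> nat) then F i else 0) = if (c < n)%N then F c else 0.
Proof.
case: ltnP => hc.
  rewrite (bigD1 (Ordinal hc)) //= eqxx big1 ?addr0 // => i hi.
  case: eqP => // e; move: hi; have -> : i = Ordinal hc by apply: val_inj.
  by rewrite eqxx.
rewrite big1 // => i _; case: eqP => // e.
by move: (ltn_ord i); rewrite e ltnNge hc.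
Qed.

Lemma sum_widen (F : nat -> K) A B : (A <= B)%N ->
  (forall i, (A <= i)%N -> (i < B)%N -> F i = 0) ->
  \sum_(i < A) F i = \sum_(i < B) F i.
Proof.
move=> hAB hF.
rewrite -!(big_mkord xpredT) [RHS](big_cat_nat (n:=A)) //=.
rewrite [X in _ = _ + X]big_nat_cond [X in _ = _ + X]big1 ?addr0 // => i /andP[/andP[h1 h2] _].
exact: hF.
Qed.

Lemma cv_ext p f g N : (forall i, (i <= N)%N -> f i = g i) -> cv p f N = cv p g N.
Proof. by move=> h; apply: eq_bigr => i _; rewrite h // leq_subr. Qed.

Lemma cv_coef p r N : cv p (fun i => r`_i) N = (p * r)`_N.
Proof. by rewrite coefM. Qed.

Lemma coefM_ext p (A B : {poly K}) N : (forall i, (i <= N)%N -> A`_i = B`_i) -> (p * A)`_N = (p * B)`_N.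
Proof. by move=> h; rewrite -!cv_coef; apply: cv_ext. Qed.

Definition tr N f : {poly K} := \poly_(i < N.+1) f i.

Lemma cv_tr p f N i : (i <= N)%N -> cv p f i = (p * tr N f)`_i.
Proof.
move=> hi; rewrite -cv_coef; apply: cv_ext => j hj.
by rewrite coef_poly ltnS (leq_trans hj hi).
Qed.


Lemma cvM p q f N : cv (p * q) f N = cv p (cv q f) N.
Proof.
have h : forall i, (i <= N)%N -> cv q f i = (q * tr N f)`_i.
  by move=> i hi; apply: cv_tr.
rewrite (cv_ext p h) cv_coef mulrA -cv_coef; apply: cv_ext => i hi.
by rewrite coef_poly ltnS (leq_trans hi (leqnn N)).
Qed.

Lemma cvDl p q f N : cv (p + q) f N = cv p f N + cv q f N.
Proof. by rewrite /cv -big_split; apply: eq_bigr => i _; rewrite coefD mulrDl. Qed.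

Lemma cv_add p f g N : cv p (fun i => f i + g i) N = cv p f N + cv p g N.
Proof. by rewrite /cv -big_split; apply: eq_bigr => i _; rewrite mulrDr. Qed.

Lemma cv_scale p c f N : cv p (fun i => c * f i) N = c * cv p f N.
Proof. by rewrite /cv mulr_sumr; apply: eq_bigr => i _; rewrite mulrCA. Qed.

Lemma cv1 f N : cv 1 f N = f N.
Proof.
rewrite /cv big_ord_recl coef1 eqxx mul1r subn0 big1 ?addr0 // => i _.
by rewrite coef1 /= mul0r.
Qed.

Lemma cvXn b f N : cv 'X^b f N = if (b <= N)%N then f (N - b)%N else 0.
Proof.
rewrite /cv (eq_bigr (fun i : 'I_N.+1 => if (i == b :> nat) then f (N - i)%N else 0)).
  by rewrite (sum_ifeq (fun i => f (N - i)%N)) ltnS.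
by move=> i _; rewrite coefXn; case: eqP; rewrite ?mul1r ?mul0r.
Qed.

Lemma cv_1mX b f N : (0 < b)%N ->
  cv (1 - 'X^b) f N = f N - (if (b <= N)%N then f (N - b)%N else 0).
Proof.
move=> hb; rewrite -cvXn -[in RHS](cv1 f N).
by rewrite /cv -sumrB; apply: eq_bigr => i _; rewrite coefB mulrBl.
Qed.

Definition rats f := exists P Q : {poly K}, Q`_0 != 0 /\ forall N, cv Q f N = P`_N.

Lemma ratE f : rational_series f <-> rats f.
Proof. by []. Qed.

Lemma rat_ext f g : (forall N, f N = g N) -> rats f -> rats g.
Proof.
move=> e [P [Q [h1 h2]]]; exists P, Q; split => // N.
by rewrite -h2; apply: cv_ext.
Qed.

Lemma rat_poly r : rats (fun i => r`_i).
Proof.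
exists r, 1; split; first by rewrite coef1 oner_eq0.
by move=> N; rewrite cv_coef mul1r.
Qed.

Lemma rat0 : rats (fun _ => 0).
Proof. by apply: rat_ext (rat_poly 0) => N; rewrite coef0. Qed.

Lemma rat_add f g : rats f -> rats g -> rats (fun i => f i + g i).
Proof.
move=> [P1 [Q1 [h1 e1]]] [P2 [Q2 [h2 e2]]].
exists (Q2 * P1 + Q1 * P2), (Q1 * Q2); split; first by rewrite coef0M mulf_neq0.
move=> N; rewrite cv_add coefD; congr (_ + _).
  by rewrite [Q1 * Q2]mulrC cvM -cv_coef; apply: cv_ext => i _; rewrite e1.
by rewrite cvM -cv_coef; apply: cv_ext => i _; rewrite e2.
Qed.

Lemma rat_scale c f : rats f -> rats (fun i => c * f i).
Proof.
move=> [P [Q [h e]]]; exists (c *: P), Q; split => // N.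
by rewrite cv_scale e coefZ.
Qed.

Lemma rat_sub f g : rats f -> rats g -> rats (fun i => f i - g i).
Proof.
move=> hf hg; apply: rat_ext (rat_add hf (rat_scale (-1) hg)) => N.
by rewrite mulN1r.
Qed.

Lemma rat_cv p f : rats f -> rats (cv p f).
Proof.
move=> [P [Q [h e]]]; exists (p * P), Q; split => // N.
rewrite -cvM mulrC cvM -cv_coef; apply: cv_ext => i _; exact: e.
Qed.

Lemma rat_div q f : q`_0 != 0 -> rats (cv q f) -> rats f.
Proof.
move=> hq [P [Q [h e]]]; exists P, (Q * q); split; first by rewrite coef0M mulf_neq0.
by move=> N; rewrite cvM.
Qed.

Lemma rat_sum (F : nat -> nat -> K) n : (forall j, (j < n)%N -> rats (F j)) ->
  rats (fun i => \sum_(j < n) F j i).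
Proof.
elim: n => [|n IH] h.
  by apply: rat_ext rat0 => N; rewrite big_ord0.
apply: rat_ext (rat_add (IH (fun j hj => h j (ltnW hj))) (h n (ltnSn n))) => N.
by rewrite big_ord_recr.
Qed.

End A.


Section B.
Variable K : fieldType.
Implicit Types (f g : nat -> K) (p q r : {poly K}) (G : bser K).

Definition ser (u : nat -> {poly K}) (N : nat) : K := \sum_(n < N.+1) (u n)`_(N - n).

Lemma ser_ext u v N : (forall n, u n = v n) -> ser u N = ser v N.
Proof. by move=> h; apply: eq_bigr => n _; rewrite h. Qed.

Lemma ser_add u v N : ser (fun n => u n + v n) N = ser u N + ser v N.
Proof. by rewrite /ser -big_split; apply: eq_bigr => n _; rewrite coefD. Qed.

Lemma ser_sub u v N : ser (fun n => u n - v n) N = ser u N - ser v N.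
Proof. by rewrite /ser -sumrB; apply: eq_bigr => n _; rewrite coefB. Qed.

Lemma ser_const (c : nat -> K) N : ser (fun n => (c n)%:P) N = c N.
Proof.
rewrite /ser big_ord_recr /= subnn coefC eqxx big1 ?add0r // => i _.
by rewrite coefC subn_eq0 leqNgt ltn_ord.
Qed.

Lemma comp_Xk_coef p k (r : nat) : (p \Po 'X^k)`_r =
  \sum_(m < size p) (if (k * m == r)%N then p`_m else 0).
Proof.
rewrite comp_polyE coef_sum; apply: eq_bigr => m _.
rewrite coefZ -exprM coefXn eq_sym.
by case: eqP; rewrite ?mulr1 ?mulr0.
Qed.

Lemma sz_ser G k N : subst_zk G k N = ser (fun n => G n \Po 'X^k) N.
Proof.
apply: eq_bigr => n _; rewrite comp_Xk_coef; apply: eq_bigr => m _.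
have hn : (n <= N)%N by rewrite -ltnS.
have -> : (n + k * m == N)%N = (k * m == N - n)%N.
  by apply/idP/idP => /eqP h; apply/eqP; lia.
by [].
Qed.

Lemma ser_shift u a N :
  ser (fun n => if n is n'.+1 then 'X^a * u n' else 0) N =
  if (a.+1 <= N)%N then ser u (N - a.+1)%N else 0.
Proof.
case: N => [|N]; first by rewrite /ser big_ord_recl big_ord0 coef0 addr0.
rewrite /ser big_ord_recl /= coef0 add0r.
rewrite (eq_bigr (fun n : 'I_N.+1 =>
   if (N - n < a)%N then 0 else (u n)`_(N - n - a))); last first.
  by move=> n _; rewrite /bump /= add1n subSS coefXnM.
rewrite ltnS subSS; case: leqP => ha.
  rewrite -(@sum_widen K (fun n => if (N - n < a)%N then 0 else (u n)`_(N - n - a)) (N - a).+1 N.+1).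
  - apply: eq_bigr => n _; rewrite ifF; first by rewrite subnAC. apply/negbTE; rewrite -leqNgt.
    have := ltn_ord n; lia.
  - by rewrite ltnS leq_subr.
  - by move=> i hi hi2; rewrite ifT //; lia.
rewrite big1 // => n _; rewrite ifT //; lia.
Qed.

End B.


Section C.
Variable K : fieldType.
Implicit Types (f g : nat -> K) (p q r : {poly K}) (G : bser K).

Lemma reidx (Phi : nat -> K) n M : (n <= M)%N ->
  \sum_(N' < M.+1) (if (n <= N')%N then Phi N' else 0) =
  \sum_(d < M.+1 - n) Phi (d + n)%N.
Proof.
move=> hn; rewrite -(big_mkord xpredT (fun N' => if (n <= N')%N then Phi N' else 0)).
rewrite -(big_mkord xpredT (fun d => Phi (d + n)%N)).
rewrite (big_cat_nat (n:=n)) //=; last by lia.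
rewrite big_nat_cond big1 ?add0r; last first.
  by move=> i /andP[/andP[_ h] _]; rewrite ifF //; apply/negbTE; rewrite -ltnNge.
rewrite (@big_addn _ _ _ 0 M.+1 n).
by apply: eq_bigr => i _; rewrite leq_addl.
Qed.

Lemma comp_sum_coef (F : nat -> K) (E : nat -> nat) n k (r : nat) :
  ((\sum_(j < n) F j *: 'X^(E j)) \Po 'X^k)`_r =
  \sum_(j < n) F j * ((r == k * E j)%N)%:R.
Proof.
rewrite linear_sum coef_sum; apply: eq_bigr => j _.
rewrite linearZ /= comp_Xn_poly -exprM coefZ coefXn. done.
Qed.

Lemma zt G k M : ser (fun n => bs_zt G n \Po 'X^k) M = subst_zk G k.+1 M.
Proof.
transitivity (\sum_(n < M.+1) \sum_(d < M.+1)
   (if (n + k.+1 * d == M)%N then (G n)`_d else 0)); last first.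
  apply: eq_bigr => n _.
  rewrite (@sum_widen K (fun d => if (n + k.+1 * d == M)%N then (G n)`_d else 0) M.+1 (size (G n) + M.+1)) ?leq_addl //; last first.
    move=> i hi _; rewrite ifF //; apply/negbTE; apply/eqP; nia.
  rewrite [RHS](@sum_widen K (fun d => if (n + k.+1 * d == M)%N then (G n)`_d else 0) (size (G n)) (size (G n) + M.+1)) ?leq_addr //.
  move=> i hi _; rewrite nth_default //; by case: ifP.
rewrite /ser.
rewrite (eq_bigr (fun N' : 'I_M.+1 => \sum_(n < M.+1)
   (if (n <= N')%N then (G n)`_(N' - n) * ((M - N' == k * (N' - n))%N)%:R else 0))); last first.
  move=> N' _; rewrite /bs_zt.
  rewrite (comp_sum_coef (fun n => (G n)`_(N' - n)) (fun n => (N' - n)%N)).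
  rewrite -(@sum_widen K (fun n => if (n <= N')%N then (G n)`_(N' - n) * ((M - N' == k * (N' - n))%N)%:R else 0) N'.+1 M.+1).
  - by apply: eq_bigr => n _; rewrite -ltnS ltn_ord.
  - exact: ltn_ord.
  - by move=> i hi _; rewrite ifF //; apply/negbTE; rewrite -ltnNge.
rewrite exchange_big /=; apply: eq_bigr => n _.
have hn : (n <= M)%N by rewrite -ltnS.
rewrite (reidx (fun N' => (G n)`_(N' - n) * ((M - N' == k * (N' - n))%N)%:R)) //.
rewrite (eq_bigr (fun d : 'I_(M.+1 - n) => if (n + k.+1 * d == M)%N then (G n)`_d else 0)); last first.
  move=> d _; rewrite addnK; have := ltn_ord d => hd.
  have -> : (M - (d + n) == k * d)%N = (n + k.+1 * d == M)%N.
    by apply/idP/idP => /eqP h; apply/eqP; nia.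
  by case: ifP; rewrite ?mulr1 ?mulr0.
apply: (@sum_widen K (fun d => if (n + k.+1 * d == M)%N then (G n)`_d else 0)); first by rewrite leq_subr.
move=> i hi _; rewrite ifF //; apply/negbTE/eqP; nia.
Qed.


Definition Hs G N := bs_t1 G N - bs_mul_zt (bs_zt G) N.

Lemma opE0 G : opE G 0 = Hs G 0.
Proof. by rewrite /opE /bs_div_1mzt big_ord1 expr0 mul1r. Qed.

Lemma opES G n : opE G n.+1 = Hs G n.+1 + 'X * opE G n.
Proof.
rewrite /opE /bs_div_1mzt big_ord_recl /= expr0 mul1r subn0; congr (_ + _).
rewrite mulr_sumr; apply: eq_bigr => j _.
by rewrite /bump /= add1n subSS exprS mulrA.
Qed.

Lemma ser_opE G k N : ser (fun n => opE G n \Po 'X^k) N =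
  at_t1 G N - (if (k.+1 <= N)%N then subst_zk G k.+1 (N - k.+1) else 0)
  + (if (k.+1 <= N)%N then ser (fun n => opE G n \Po 'X^k) (N - k.+1) else 0).
Proof.
transitivity (ser (fun n => (Hs G n \Po 'X^k) +
   (if n is n'.+1 then 'X^k * (opE G n' \Po 'X^k) else 0)) N).
  apply: ser_ext => -[|n]; first by rewrite opE0 addr0.
  by rewrite opES comp_polyD comp_polyM comp_polyX.
rewrite ser_add ser_shift; congr (_ + _).
transitivity (ser (fun n => ((G n).[1])%:P -
   (if n is n'.+1 then 'X^k * (bs_zt G n' \Po 'X^k) else 0)) N).
  apply: ser_ext => -[|n]; rewrite /Hs comp_polyB /bs_t1 comp_polyC /bs_mul_zt.
    by rewrite comp_poly0.
  by rewrite comp_polyM comp_polyX.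
rewrite ser_sub ser_const ser_shift.
by case: ifP => // _; rewrite zt.
Qed.

Lemma at_t0_opE G N : at_t0 (opE G) N = at_t1 G N.
Proof.
rewrite /at_t0 /at_t1; case: N => [|N].
  by rewrite opE0 /Hs /bs_mul_zt /bs_t1 coefB coefC coef0 subr0.
by rewrite opES coefD coefXM /= addr0 /Hs /bs_mul_zt /bs_t1 coefB coefC coefXM /= subr0.
Qed.

Lemma at_t1_sz G N : at_t1 G N = subst_zk G 0 N.
Proof.
rewrite sz_ser expr0 -[LHS](ser_const (fun n => (G n).[1])).
by apply: ser_ext => n; rewrite comp_polyCr.
Qed.

Lemma coef0_1mX b : (1 - 'X^(b.+1) : {poly K})`_0 != 0.
Proof. by rewrite coefB coef1 coefXn /= subr0 oner_eq0. Qed.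

Lemma opE_nice G : nice G -> very_nice (opE G).
Proof.
move=> hG; split; last first.
  apply: rat_ext (hG 0%N) => N; by rewrite at_t0_opE at_t1_sz.
move=> k; apply: rat_ext (fun N => esym (sz_ser (opE G) k N)) _.
apply: (rat_div (coef0_1mX k)).
have h : rats (fun N => at_t1 G N - cv 'X^(k.+1) (subst_zk G k.+1) N).
  apply: rat_sub; last exact: rat_cv (hG k.+1).
  by apply: rat_ext (hG 0%N) => N; rewrite at_t1_sz.
apply: rat_ext h => N.
by rewrite cv_1mX // ser_opE cvXn addrK.
Qed.

Lemma opE_0 G : G 0%N = 0 -> opE G 0%N = 0.
Proof. by move=> h; rewrite opE0 /Hs /bs_t1 /bs_mul_zt h horner0 subr0. Qed.

End C.


Section Nat.
Local Open Scope nat_scope.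
Definition W k M m := (\sum_(i < m) nat_of_bool ((k.+1 * i <= M) && (m %| M - k.+1 * i)))%N.
Definition W' k M m := (\sum_(i < m) nat_of_bool ((k.+1 * i.+1 <= M) && (m %| M - k.+1 * i.+1)))%N.
Definition C k M m := (\sum_(j < k.+1) nat_of_bool ((m != 0) && (j * m == M)))%N.

Lemma sum_eq_nat n q : (\sum_(j < n) nat_of_bool (j == q :> nat))%N = nat_of_bool (q < n)%N.
Proof.
case: ltnP => hq.
  rewrite (bigD1 (Ordinal hq)) //= eqxx big1 ?addn0 // => i hi.
  case: eqP => // e; move: hi; have -> : i = Ordinal hq by apply: val_inj.
  by rewrite eqxx.
rewrite big1 // => i _; case: eqP => // e.
by move: (ltn_ord i); rewrite e ltnNge hq.
Qed.

Lemma W_split k M m : W k M m = (W' k M m + C k M m)%N.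
Proof.
case: m => [|m'].
  by rewrite /W /W' /C !big_ord0 big1.
move: (ltn0Sn m'); move: m'.+1 => m mpos.
pose g i := nat_of_bool ((k.+1 * i <= M) && (m %| M - k.+1 * i))%N.
have e1 : (\sum_(i < m.+1) g i = W k M m + g m)%N by rewrite big_ord_recr.
have e2 : (\sum_(i < m.+1) g i = g 0 + W' k M m)%N by rewrite big_ord_recl.
have e3 : (g 0 = g m + C k M m)%N.
  rewrite /g muln0 subn0 /=.
  case: (boolP (m %| M)) => hd.
    move: hd => /dvdnP [q ->].
    rewrite -mulnBl dvdn_mull // andbT leq_pmul2r //.
    rewrite /C (eq_bigr (fun j : 'I_k.+1 => nat_of_bool (j == q :> nat))); last first.
      by move=> j _; rewrite eqn_pmul2r // -lt0n mpos.
    rewrite sum_eq_nat; case: leqP => h /=; rewrite ltnS; [by rewrite h | by rewrite leqNgt h].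
  have -> : ((k.+1 * m <= M) && (m %| M - k.+1 * m))%N = false.
    apply/negbTE/negP => /andP [h1 h2]; move: h2.
    by rewrite dvdn_subl ?dvdn_mull // (negbTE hd).
  rewrite /C big1 // => j _; case: (boolP (j * m == M)) => [/eqP e|]; last by rewrite andbF.
  by move: hd; rewrite -e dvdn_mull.
lia.
Qed.

Lemma W'_shift k M m : W' k M m = if (k.+1 <= M)%N then W k (M - k.+1) m else 0%N.
Proof.
have [h|h] := leqP k.+1 M; rewrite ?h; last first.
  rewrite /W' big1 // => i _.
  by have -> : (k.+1 * i.+1 <= M)%N = false by apply/negbTE; nia.
  rewrite /W /W'; apply: eq_bigr => i _.
  have -> : (k.+1 * i.+1 <= M)%N = (k.+1 * i <= M - k.+1)%N by apply/idP/idP; nia.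
  by have -> : (M - k.+1 * i.+1 = M - k.+1 - k.+1 * i)%N by nia.
Qed.

Lemma condT n' n m i k N : (n' <= N)%N -> (n <= N)%N ->
  [&& n + i <= n', m %| n' - n - i & k * i == N - n']%N =
  (n' == N - k * i)%N && ((k.+1 * i <= N - n) && (m %| N - n - k.+1 * i))%N.
Proof.
move=> hn' hn.
case: (boolP (n' == N - k * i)%N) => /eqP e /=.
  have [h1|h1] := boolP (n + i <= n')%N.
    rewrite /=.
    have -> : (k.+1 * i <= N - n)%N = true by apply/idP; nia.
    have -> : (n' - n - i = N - n - k.+1 * i)%N by nia.
    have -> : (k * i == N - n')%N = true by apply/eqP; nia.
    by rewrite andbT.
  rewrite /=; symmetry; apply/negbTE; apply/negP => /andP [h2 _]; move/negP: h1; apply; nia.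
have -> : (k * i == N - n')%N = false by apply/negbTE/eqP; nia.
by rewrite !andbF.
Qed.

End Nat.

Section D.
Variable K : fieldType.
Implicit Types (f g : nat -> K) (p q r : {poly K}) (G : bser K).

Lemma sum_if_cast n (b : 'I_n -> bool) (a : K) :
  \sum_(i < n) (if b i then a else 0) = a * (\sum_(i < n) nat_of_bool (b i))%:R.
Proof.
rewrite natr_sum mulr_sumr; apply: eq_bigr => i _.
by case: (b i); rewrite ?mulr1 ?mulr0.
Qed.

Lemma sum_from1 (F : nat -> K) n : F 0%N = 0 -> \sum_(1 <= i < n) F i = \sum_(i < n) F i.
Proof.
move=> h; case: n => [|n]; first by rewrite big_geq // big_ord0.
by rewrite -(big_mkord xpredT F) (big_ltn (ltn0Sn _)) h add0r.
Qed.

Definition Vp G n' : {poly K} := \sum_(1 <= n < n'.+1) \sum_(1 <= m < size (G n))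
  \sum_(i < m) (if ((n + i <= n') && (m %| (n' - n - i)))%N then (G n)`_m *: 'X^i else 0).

Lemma opN_V G n : opN G n = ((G n)`_0)%:P + Vp G n.
Proof. by []. Qed.

Definition T G k N n' n m (i : nat) : K :=
  if [&& n + i <= n', m %| n' - n - i & k * i == N - n']%N then (G n)`_m else 0.

Lemma coefV G k N n' : (Vp G n' \Po 'X^k)`_(N - n') =
  \sum_(1 <= n < n'.+1) \sum_(1 <= m < size (G n)) \sum_(i < m) T G k N n' n m i.
Proof.
rewrite /Vp linear_sum coef_sum; apply: eq_bigr => n _.
rewrite linear_sum coef_sum; apply: eq_bigr => m _.
rewrite linear_sum coef_sum; apply: eq_bigr => i _.
rewrite /T; case: ifP => c /=.
  rewrite linearZ /= comp_Xn_poly -exprM coefZ coefXn eq_sym.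
  by case: eqP; rewrite ?andbT ?andbF ?c ?mulr1 ?mulr0.
by rewrite linear0 coef0 andbA c.
Qed.


Lemma sV G k N : G 0%N = 0 -> ser (fun n => Vp G n \Po 'X^k) N =
  \sum_(n < N.+1) \sum_(m < size (G n)) (G n)`_m * (W k (N - n)%N m)%:R.
Proof.
move=> h0; rewrite /ser.
rewrite (eq_bigr (fun n' : 'I_N.+1 => \sum_(n < N.+1) \sum_(m < size (G n))
   \sum_(i < m) T G k N n' n m i)); last first.
  move=> n' _; rewrite coefV.
  rewrite sum_from1; last by rewrite h0 size_poly0 big_geq.
  rewrite -(@sum_widen K (fun n => \sum_(m < size (G n)) \sum_(i < m) T G k N n' n m i) n'.+1 N.+1).
  - by apply: eq_bigr => n _; rewrite sum_from1 // big_ord0.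
  - exact: ltn_ord n'.
  - move=> i hi _; rewrite big1 // => m _; rewrite big1 // => j _; rewrite /T.
    by case: ifP => // /andP [c _]; exfalso; lia.
rewrite exchange_big; apply: eq_bigr => n _ /=.
rewrite exchange_big; apply: eq_bigr => m _ /=.
rewrite exchange_big /=.
rewrite (eq_bigr (fun i : 'I_m => if ((k.+1 * i <= N - n) && (m %| N - n - k.+1 * i))%N
   then (G n)`_m else 0)).
  by rewrite sum_if_cast.
move=> i _.
rewrite (eq_bigr (fun n' : 'I_N.+1 => if (n' == (N - k * i)%N :> nat) then
   (if ((k.+1 * i <= N - n) && (m %| N - n - k.+1 * i))%N then (G n)`_m else 0) else 0)).
  by rewrite (sum_ifeq (fun _ => if ((k.+1 * i <= N - n) && (m %| N - n - k.+1 * i))%N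
   then (G n)`_m else 0)) ltnS leq_subr.
move=> n' _; rewrite /T condT; first by case: (n' == _ :> nat).
  by rewrite -ltnS.
by rewrite -ltnS.
Qed.

Definition S G k N := \sum_(n < N.+1) \sum_(m < size (G n)) (G n)`_m * (W k (N - n)%N m)%:R.
Definition R G k N := \sum_(n < N.+1) \sum_(m < size (G n)) (G n)`_m * (C k (N - n)%N m)%:R.

Lemma S_rec G k N : S G k N = (if (k.+1 <= N)%N then S G k (N - k.+1)%N else 0) + R G k N.
Proof.
rewrite /S /R.
transitivity (\sum_(n < N.+1) \sum_(m < size (G n)) (G n)`_m * (W' k (N - n)%N m)%:R +
   \sum_(n < N.+1) \sum_(m < size (G n)) (G n)`_m * (C k (N - n)%N m)%:R).
  rewrite -big_split; apply: eq_bigr => n _; rewrite -big_split; apply: eq_bigr => m _.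
  by rewrite W_split natrD mulrDr.
congr (_ + _).
rewrite (eq_bigr (fun n : 'I_N.+1 => \sum_(m < size (G n)) (G n)`_m *
   (if (k.+1 <= N - n)%N then W k (N - n - k.+1)%N m else 0%N)%:R)); last first.
  by move=> n _; apply: eq_bigr => m _; rewrite W'_shift.
have [h|h] := leqP k.+1 N.
- rewrite -(@sum_widen K (fun n => \sum_(m < size (G n)) (G n)`_m *
     (if (k.+1 <= N - n)%N then W k (N - n - k.+1)%N m else 0%N)%:R) (N - k.+1)%N.+1 N.+1).
  + apply: eq_bigr => n _; apply: eq_bigr => m _; have := ltn_ord n => hn.
    rewrite ifT; [by rewrite subnAC | lia].
  + by rewrite ltnS leq_subr.
  + move=> i hi _; rewrite big1 // => m _; rewrite ifF ?mulr0 //.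
    apply/negbTE; rewrite -ltnNge; lia.
- rewrite big1 // => n _; rewrite big1 // => m _; rewrite ifF ?mulr0 //.
  apply/negbTE; rewrite -ltnNge; have := ltn_ord n; lia.
Qed.

Lemma at_t0_sum G (j : nat) N : at_t0 G N = \sum_(n < N.+1) \sum_(m < size (G n))
  (if (m == 0 :> nat) && (n + j * m == N)%N then (G n)`_m else 0).
Proof.
rewrite (eq_bigr (fun n : 'I_N.+1 => if (n == N :> nat) then (G n)`_0 else 0)).
  by rewrite (sum_ifeq (fun n => (G n)`_0)) ltnSn.
move=> n _.
rewrite (eq_bigr (fun m : 'I_(size (G n)) => if (m == 0%N :> nat) then
   (if (n == N :> nat) then (G n)`_0 else 0) else 0)).
  rewrite (sum_ifeq (fun _ => if (n == N :> nat) then (G n)`_0 else 0)).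
  case: ltnP => // hs; rewrite nth_default //; by case: ifP.
move=> m _; have [->|hm] := eqVneq (m : nat) 0%N.
  by rewrite muln0 addn0.
by [].
Qed.

Lemma sz_minus G (j : nat) N : subst_zk G j N - at_t0 G N = \sum_(n < N.+1) \sum_(m < size (G n))
  (if (m != 0 :> nat) && (n + j * m == N)%N then (G n)`_m else 0).
Proof.
rewrite (at_t0_sum G j) /subst_zk -sumrB; apply: eq_bigr => n _; rewrite -sumrB.
apply: eq_bigr => m _; have [->|hm] := eqVneq (m : nat) 0%N.
  by rewrite /= subrr.
by rewrite /= subr0.
Qed.

Lemma R_eq G k N : R G k N = \sum_(j < k.+1) (subst_zk G j N - at_t0 G N).
Proof.
rewrite (eq_bigr (fun j : 'I_k.+1 => \sum_(n < N.+1) \sum_(m < size (G n))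
  (if (m != 0 :> nat) && (n + j * m == N)%N then (G n)`_m else 0))); last first.
  by move=> j _; rewrite sz_minus.
rewrite exchange_big /R; apply: eq_bigr => n _; rewrite exchange_big; apply: eq_bigr => m _ /=.
rewrite /C -sum_if_cast; apply: eq_bigr => j _.
have hn : (n <= N)%N by rewrite -ltnS.
by have -> : (n + j * m == N)%N = (j * m == N - n)%N by apply/idP/idP => /eqP ?; apply/eqP; lia.
Qed.

Lemma opN_sz G k N : subst_zk (opN G) k N = at_t0 G N + ser (fun n => Vp G n \Po 'X^k) N.
Proof.
rewrite sz_ser /at_t0 -(ser_const (fun n => (G n)`_0)) -ser_add.
by apply: ser_ext => n; rewrite opN_V comp_polyD comp_polyC.
Qed.

Lemma opN_nice G : G 0%N = 0 -> very_nice G -> nice (opN G).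
Proof.
move=> h0 [hn ht] k.
have hs : rats (S G k).
  apply: (rat_div (coef0_1mX K k)).
  have hR : rats (R G k).
    apply: rat_ext (fun N => esym (R_eq G k N)) _.
    apply: (@rat_sum _ (fun j N => subst_zk G j N - at_t0 G N)) => j _.
    exact: rat_sub (hn j) ht.
  apply: rat_ext hR => N.
  by rewrite cv_1mX // (S_rec G k N) addrAC subrr add0r.
apply: rat_ext (rat_add ht hs) => N.
by rewrite opN_sz (sV _ _ h0).
Qed.

Lemma opN_0 G : G 0%N = 0 -> opN G 0%N = 0.
Proof. by move=> h; rewrite opN_V h coef0 /Vp big_geq // addr0. Qed.

End D.

Unset Implicit Arguments.

Lemma no_two_N_tail o s : no_two_N (o :: s) -> no_two_N s.
Proof. by case: o; case: s => [|[] s]. Qed.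

Lemma main_ind (K : fieldType) (s : seq op) : forall G : bser K, G 0%N = 0 -> nice G ->
  (rational_series (at_t0 G) \/ head OE s = OE) -> no_two_N s -> nice (apply_ops s G).
Proof.
elim: s => [|o s IH] G h0 hn hv ht; first exact: hn.
have ht' := @no_two_N_tail o s ht.
case: o hv ht => hv ht /=.
  have [hn' hv'] := opE_nice hn.
  exact: (IH _ (opE_0 h0) hn' (or_introl hv') ht').
have hv0 : rational_series (at_t0 G) by case: hv.
apply: (IH _ (opN_0 h0) (opN_nice h0 (conj hn hv0))) => //.
by right; move: ht; clear; case: s => [|[] s].
Qed.

Theorem mainTheorem7 (K : fieldType) (hK : [pchar K] =i pred0)
  (F : bser K) (hF0 : F 0%N = 0) (hF : very_nice F)
  (Theta : seq op) (hTheta : no_two_N Theta) :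
  rational_series (at_t1 (apply_ops Theta F)).
Proof.
have h := @main_ind K Theta F hF0 hF.1 (or_introl hF.2) hTheta.
apply: rat_ext (h 0%N) => N.
by rewrite at_t1_sz.
Qed.
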